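(* Let $F,F'$ be topological hyperfields, $F''$ a hyperfield, and $f:F\to F''$, $f':F'\to F''$ hyperfield morphisms. Let $*\in\{s,w\}$ and $M\in\operatorname{Gr}^*(r,F''^n)$. Suppose $H:F_0\times[0,1]\to F'_0$ is a hyperfield homotopy with $f'(H(x,t))=f(x)$ for all $x\in F$ and $t\in[0,1]$. Then $([\varphi],t)\mapsto[H_t\circ\varphi]$ defines a continuous map (homotopy) $$\operatorname{Real}^*_F(M)\times[0,1]\to\operatorname{Real}^*_{F'}(M).$$
   Context: Hyperfields. A hyperfield $(F,\odot,\boxplus,1,0)$ has the following data and axioms. - $\odot$ is a commutative multiplication and $\boxplus$ is a hyperaddition assigning to each $x,y$ a nonempty subset $x\boxplus y\subseteq F$ (extended to subsets by unions). - $\boxplus$ is commutative and associative, and $x\boxplus 0=\{x\}$. - Each $x$ has a unique $-x$ with $0\in x\boxplus(-x)$, and $x\in y\boxplus z \iff z\in x\boxplus(-y)$. - $(F\setminus\{0\},\odot,1)$ is an abelian group $F^\times$, $0\odot x=0$, and $x\odot(y\boxplus z)=(x\odot y)\boxplus(x\odot z)$. A homomorphism (morphism) $h$ satisfies $h(0)=0$, $h(1)=1$, $h(xy)=h(x)h(y)$ and $h(x\boxplus y)\subseteq h(x)\boxplus h(y)$. Topological hyperfields. A topological hyperfield is a hyperfield with a topology $T$ in which $F\setminus\{0\}$ is open, multiplication is continuous, and inversion on $F^\times$ is continuous. $F_0$ is $F$ with the 0-coarse topology, whose open sets are $F$ and all $U\in T$ with $0\notin U$. A hyperfield homotopy is a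 continuous $H:F\times[0,1]\to F'$ with each $H_t=H(\cdot,t)$ a hyperfield homomorphism. Grassmannians. A strong Grassmann–Plücker (GP) function of rank $r$ on $E=\{1,\dots,n\}$ is a function $\varphi:E^r\to F$ with the following properties. - $\varphi$ is not identically $0$. - $\varphi$ is alternating. - For all $(i_1,\dots,i_{r+1})\in E^{r+1}$ and $(j_1,\dots,j_{r-1})\in E^{r-1}$: $$0\in\boxplus_{k=1}^{r+1}(-1)^k\varphi(i_1,\dots,\widehat{i_k},\dots,i_{r+1})\odot\varphi(i_k,j_1,\dots,j_{r-1}).$$ A weak GP function is a function $\varphi:E^r\to F$ with the following properties. - $\varphi$ is nonzero and alternating. - Its support is the set of bases of a matroid. - The relation holds whenever $|\{i\}\setminus\{j\}|=3$. $\operatorname{Gr}^s(r,F^n)$ and $\operatorname{Gr}^w(r,F^n)$ are the sets of classes of strong, resp. weak, GP functions modulo $\varphi\sim\alpha\varphi$, $\alpha\in F^\times$. For topological $F$ they have the subspace topology of $(F^{E^r}\setminus\{0\})/F^\times$, which carries the product and quotient topologies. Realization spaces. A morphism $f$ induces $\operatorname{Gr}^*(f):[\varphi]\mapsto[f\circ\varphi]$. For $M\in\operatorname{Gr}^*(r,F''^n)$, the realization space $\operatorname{Real}^*_F(M)=\operatorname{Gr}^*(f)^{-1}(M)\subseteq\operatorname{Gr}^*(r,F^n)$ has the subspace topology, computed with the given topology of $F$. *)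

(* Defs.v *)
From Stdlib Require Import Reals.
From mathcomp Require Import all_boot all_fingroup.

Set Implicit Arguments.
Unset Strict Implicit.
Unset Printing Implicit Defensive.

Definition topology (X : Type) := (X -> Prop) -> Prop.

Definition is_topology (X : Type) (T : topology X) : Prop :=
  T (fun _ => True) /\ T (fun _ => False) /\
  (forall (I : Type) (U : I -> X -> Prop),
      (forall i, T (U i)) -> T (fun x => exists i, U i x)) /\
  (forall U V, T U -> T V -> T (fun x => U x /\ V x)).

Definition continuous (X Y : Type) (TX : topology X) (TY : topology Y)
  (g : X -> Y) : Prop :=
  forall V, TY V -> TX (fun x => V (g x)).

Definition prod_top (X Y : Type) (TX : topology X) (TY : topology Y)
  : topology (X * Y) :=
  fun W => forall p, W p ->
    exists U V, TX U /\ TY V /\ U p.1 /\ V p.2 /\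
      forall q, U q.1 -> V q.2 -> W q.

Definition sub_top (X : Type) (P : X -> Prop) (TX : topology X)
  : topology {x | P x} :=
  fun V => exists U, TX U /\ forall x, V x <-> U (proj1_sig x).

Definition fun_top (A : finType) (X : Type) (TX : topology X)
  : topology (A -> X) :=
  fun W => forall phi, W phi ->
    exists U : A -> X -> Prop,
      (forall a, TX (U a)) /\ (forall a, U a (phi a)) /\
      forall psi, (forall a, U a (psi a)) -> W psi.

Definition quot_top (X Y : Type) (TX : topology X) (q : X -> Y)
  : topology Y :=
  fun V => TX (fun x => V (q x)).

Definition I01 := {t : R | Rle 0 t /\ Rle t 1}.

Definition R_top : topology R :=
  fun U => forall x, U x -> exists eps, Rlt 0 eps /\
    forall y, Rlt (Rabs (Rminus y x)) eps -> U y.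

Definition I01_top : topology I01 :=
  @sub_top R (fun t => Rle 0 t /\ Rle t 1) R_top.

(* hadd x y z  means  z \in x [+] y                                    *)

Record hyperfield := Hyperfield {
  hcar :> Type;
  hzero : hcar;
  hone : hcar;
  hmul : hcar -> hcar -> hcar;
  hadd : hcar -> hcar -> hcar -> Prop;
  hneg : hcar -> hcar;
  hinv : hcar -> hcar;
  hmulC : forall x y, hmul x y = hmul y x;
  hmulA : forall x y z, hmul x (hmul y z) = hmul (hmul x y) z;
  hmul1 : forall x, hmul hone x = x;
  hone_neq0 : hone <> hzero;
  hmul_neq0 : forall x y, x <> hzero -> y <> hzero -> hmul x y <> hzero;
  hmulV : forall x, x <> hzero -> hmul x (hinv x) = hone;
  hmul0 : forall x, hmul hzero x = hzero;
  hadd_nonempty : forall x y, exists z, hadd x y z;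
  haddC : forall x y z, hadd x y z <-> hadd y x z;
  haddA : forall x y z w,
    (exists u, hadd x y u /\ hadd u z w) <-> (exists u, hadd y z u /\ hadd x u w);
  hadd0 : forall x z, hadd x hzero z <-> z = x;
  hnegP : forall x, hadd x (hneg x) hzero;
  hneg_uniq : forall x y, hadd x y hzero -> y = hneg x;
  hrev : forall x y z, hadd y z x <-> hadd x (hneg y) z;
  hdistr : forall x y z w,
    (exists u, hadd y z u /\ w = hmul x u) <-> hadd (hmul x y) (hmul x z) w
}.

Definition hmorphism (F F' : hyperfield) (h : F -> F') : Prop :=
  h (hzero F) = hzero F' /\ h (hone F) = hone F' /\
  (forall x y, h (hmul x y) = hmul (h x) (h y)) /\
  (forall x y z, hadd x y z -> hadd (h x) (h y) (h z)).

Definition is_top_hyperfield (F : hyperfield) (T : topology F) : Prop :=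
  is_topology T /\
  T (fun x => x <> hzero F) /\
  continuous (prod_top T T) T (fun p : F * F => hmul p.1 p.2) /\
  continuous (@sub_top F (fun x => x <> hzero F) T) T
             (fun x => hinv (proj1_sig x)).

Definition coarse0 (F : hyperfield) (T : topology F) : topology F :=
  fun U => (forall x, U x) \/ (T U /\ ~ U (hzero F)).

Fixpoint hsum (F : hyperfield) (l : seq F) : F -> Prop :=
  match l with
  | [::] => fun w => w = hzero F
  | a :: l' => fun w => exists u, hsum l' u /\ hadd a u w
  end.

Definition hsign (F : hyperfield) (b : bool) : F :=
  if b then hneg (hone F) else hone F.

(* Grassmann-Pluecker functions; E = 'I_n, E^r = r.-tuple 'I_n         *)

(* evaluate phi on a sequence (0 if the length is not r) *)
Definition tapp (F : hyperfield) (n r : nat) (phi : r.-tuple 'I_n -> F)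
  (s : seq 'I_n) : F :=
  match (insub s : option (r.-tuple 'I_n)) with
  | Some t => phi t
  | None => hzero F
  end.

Definition not_zero (F : hyperfield) (n r : nat) (phi : r.-tuple 'I_n -> F) :=
  exists t, phi t <> hzero F.

Definition alternating (F : hyperfield) (n r : nat) (phi : r.-tuple 'I_n -> F) :=
  (forall t : r.-tuple 'I_n, ~~ uniq t -> phi t = hzero F) /\
  (forall (t : r.-tuple 'I_n) (s : 'S_r),
      phi [tuple tnth t (s i) | i < r] = hmul (hsign F (odd_perm s)) (phi t)).

(* 0 \in [+]_{k=1}^{r+1} (-1)^k phi(i_1..^i_k..i_{r+1}) phi(i_k,j_1..j_{r-1});
   k below is 0-based, so (-1)^(k+1) *)
Definition gp_relation (F : hyperfield) (n r : nat) (phi : r.-tuple 'I_n -> F)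
  (i : r.+1.-tuple 'I_n) (j : r.-1.-tuple 'I_n) : Prop :=
  hsum [seq hmul (hsign F (~~ odd k))
              (hmul (phi [tuple tnth i (lift k l) | l < r])
                    (tapp phi (tnth i k :: (j : seq 'I_n))))
       | k : 'I_(r.+1) <- enum 'I_(r.+1)] (hzero F).

Definition matroid_bases (n : nat) (B : {set 'I_n} -> Prop) : Prop :=
  (exists B0, B B0) /\
  forall B1 B2 x, B B1 -> B B2 -> x \in B1 :\: B2 ->
    exists2 y, y \in B2 :\: B1 & B (y |: (B1 :\ x)).

Definition support (F : hyperfield) (n r : nat) (phi : r.-tuple 'I_n -> F)
  : {set 'I_n} -> Prop :=
  fun B => exists t, phi t <> hzero F /\ B = [set x | x \in t].

Inductive gp_kind := Strong | Weak.

Definition GP (k : gp_kind) (F : hyperfield) (n r : nat)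
  (phi : r.-tuple 'I_n -> F) : Prop :=
  match k with
  | Strong => not_zero phi /\ alternating phi /\
              forall i j, gp_relation phi i j
  | Weak => not_zero phi /\ alternating phi /\ matroid_bases (support phi) /\
            forall (i : r.+1.-tuple 'I_n) (j : r.-1.-tuple 'I_n),
              #|[set x | x \in i] :\: [set x | x \in j]| = 3 ->
              gp_relation phi i j
  end.

Definition nzfun (F : hyperfield) (n r : nat) :=
  {phi : r.-tuple 'I_n -> F | not_zero phi}.

Definition nzfun_top (F : hyperfield) (T : topology F) (n r : nat)
  : topology (nzfun F n r) :=
  @sub_top _ (@not_zero F n r) (@fun_top (r.-tuple 'I_n) F T).

Definition cls (F : hyperfield) (n r : nat) (phi : r.-tuple 'I_n -> F)
  : (r.-tuple 'I_n -> F) -> Prop :=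
  fun psi => exists2 a, a <> hzero F & psi = (fun x => hmul a (phi x)).

Definition projspace (F : hyperfield) (n r : nat) :=
  {S : (r.-tuple 'I_n -> F) -> Prop |
     exists phi : nzfun F n r, S = cls (proj1_sig phi)}.

Definition qmap (F : hyperfield) (n r : nat) (phi : nzfun F n r)
  : projspace F n r :=
  exist _ (cls (proj1_sig phi)) (ex_intro _ phi erefl).

Definition proj_top (F : hyperfield) (T : topology F) (n r : nat)
  : topology (projspace F n r) :=
  @quot_top _ _ (@nzfun_top F T n r) (@qmap F n r).

Definition Gr (k : gp_kind) (F : hyperfield) (n r : nat) :=
  {c : projspace F n r | exists phi, GP k phi /\ proj1_sig c = cls phi}.

Definition Gr_top (k : gp_kind) (F : hyperfield) (T : topology F) (n r : nat)
  : topology (Gr k F n r) :=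
  sub_top (@proj_top F T n r).

(* Real_F(M) = Gr(f)^{-1}(M), with Gr(f)[phi] = [f o phi] *)
Definition Real (k : gp_kind) (F F'' : hyperfield) (f : F -> F'') (n r : nat)
  (M : Gr k F'' n r) :=
  {c : Gr k F n r | exists phi, proj1_sig (proj1_sig c) = cls phi /\
      proj1_sig (proj1_sig M) = cls (fun x => f (phi x))}.

Definition Real_top (k : gp_kind) (F F'' : hyperfield) (T : topology F)
  (f : F -> F'') (n r : nat) (M : Gr k F'' n r) : topology (Real f M) :=
  sub_top (@Gr_top k F T n r).

(* Main.v *)
Require Import Defs.
From Stdlib Require Import Reals.
From mathcomp Require Import all_boot all_fingroup.
From Stdlib Require Import Classical FunctionalExtensionality PropExtensionality ProofIrrelevance IndefiniteDescription.

Set Implicit Arguments.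
Unset Strict Implicit.
Unset Printing Implicit Defensive.

Lemma mulr1 (F : hyperfield) (x : F) : hmul x (hone F) = x.
Proof. by rewrite hmulC hmul1. Qed.

Lemma mulr0 (F : hyperfield) (x : F) : hmul x (hzero F) = hzero F.
Proof. by rewrite hmulC hmul0. Qed.

Lemma hmulCA (F : hyperfield) (x y z : F) : hmul x (hmul y z) = hmul y (hmul x z).
Proof. by rewrite hmulA (hmulC x y) -hmulA. Qed.

Lemma mul_eq0 (F : hyperfield) (a x : F) :
  a <> hzero F -> hmul a x = hzero F -> x = hzero F.
Proof. move=> ha hx; apply: NNPP => hx0; exact: (hmul_neq0 ha hx0). Qed.

Lemma inv_neq0 (F : hyperfield) (x : F) : x <> hzero F -> hinv x <> hzero F.
Proof.
move=> hx hi; have := hmulV hx; rewrite hi mulr0 => e.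
by apply: (@hone_neq0 F).
Qed.

Lemma mulKr (F : hyperfield) (a u : F) : a <> hzero F -> hmul (hinv a) (hmul a u) = u.
Proof. by move=> ha; rewrite hmulA (hmulC _ a) hmulV // hmul1. Qed.

Lemma norm_scale (F : hyperfield) (b u v : F) : b <> hzero F -> u <> hzero F ->
  hmul (hinv (hmul b u)) (hmul b v) = hmul (hinv u) v.
Proof.
move=> hb hu.
have hbu : hmul b u <> hzero F by apply: hmul_neq0.
have e : hinv (hmul b u) = hmul (hinv u) (hinv b).
  have e1 : hmul (hmul b u) (hmul (hinv u) (hinv b)) = hone F.
    by rewrite -hmulA (hmulA u) hmulV // hmul1 hmulV.
  by rewrite -[LHS]mulr1 -e1 mulKr.
by rewrite e -hmulA mulKr.
Qed.

Lemma hm_nz (F F' : hyperfield) (h : F -> F') : hmorphism h ->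
  forall x, x <> hzero F -> h x <> hzero F'.
Proof.
move=> [h0 [h1 [hM _]]] x hx hh.
have := hmulV hx => e.
have := congr1 h e; rewrite hM hh hmul0 h1 => e'.
by apply: (@hone_neq0 F'); rewrite -e'.
Qed.

Lemma hm_zero_iff (F F' : hyperfield) (h : F -> F') : hmorphism h ->
  forall x, h x = hzero F' <-> x = hzero F.
Proof.
move=> hh x; split; last by move=> ->; case: hh.
move=> e; apply: NNPP => hx; exact: (hm_nz hh hx e).
Qed.

Lemma hm_neg (F F' : hyperfield) (h : F -> F') : hmorphism h ->
  forall x, h (hneg x) = hneg (h x).
Proof.
move=> hh x; case: (hh) => h0 [_ [_ hA]].
apply: hneg_uniq; rewrite -h0; apply: hA; exact: hnegP.
Qed.

Lemma hm_sign (F F' : hyperfield) (h : F -> F') : hmorphism h ->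
  forall b, h (hsign F b) = hsign F' b.
Proof.
move=> hh [] /=; last by case: hh => _ [].
by rewrite (hm_neg hh); case: hh => _ [->].
Qed.

Lemma hm_hsum (F F' : hyperfield) (h : F -> F') : hmorphism h ->
  forall l w, hsum l w -> hsum (map h l) (h w).
Proof.
move=> hh; elim=> [|a l IH] w /=.
  by move=> ->; case: hh.
move=> [u [hu ha]]; exists (h u); split; first exact: IH.
by case: hh => _ [_ [_ hA]]; apply: hA.
Qed.

Lemma hm_tapp (F F' : hyperfield) (h : F -> F') (n r : nat) (phi : r.-tuple 'I_n -> F) s :
  hmorphism h -> h (tapp phi s) = tapp (fun x => h (phi x)) s.
Proof. by move=> hh; rewrite /tapp; case: insub => //; case: hh. Qed.

Lemma cls_self (F : hyperfield) (n r : nat) (phi : r.-tuple 'I_n -> F) : cls phi phi.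
Proof.
exists (hone F); first exact: hone_neq0.
by apply: functional_extensionality => x; rewrite hmul1.
Qed.

Lemma cls_scale (F : hyperfield) (n r : nat) (psi : r.-tuple 'I_n -> F) b :
  b <> hzero F -> cls (fun x => hmul b (psi x)) = cls psi.
Proof.
move=> hb; apply: functional_extensionality => chi; apply: propositional_extensionality.
split=> -[a ha ->].
  exists (hmul a b); first exact: hmul_neq0.
  by apply: functional_extensionality => x; rewrite hmulA.
exists (hmul a (hinv b)); first by apply: hmul_neq0 => //; apply: inv_neq0.
apply: functional_extensionality => x.
by rewrite -hmulA mulKr.
Qed.

Lemma cls_eq (F : hyperfield) (n r : nat) (phi psi : r.-tuple 'I_n -> F) :
  cls phi = cls psi -> exists2 b, b <> hzero F & phi = (fun x => hmul b (psi x)).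
Proof. by move=> e; have := cls_self phi; rewrite e. Qed.

Lemma cls_hm (F F' : hyperfield) (h : F -> F') (n r : nat) (phi psi : r.-tuple 'I_n -> F) :
  hmorphism h -> cls phi = cls psi -> cls (fun x => h (phi x)) = cls (fun x => h (psi x)).
Proof.
move=> hh e; case: (cls_eq e) => b hb ->.
have -> : (fun x => h (hmul b (psi x))) = (fun x => hmul (h b) (h (psi x))).
  by apply: functional_extensionality => x; case: hh => _ [_ [-> _]].
by apply: cls_scale; apply: hm_nz.
Qed.

Lemma GP_hm (k : gp_kind) (F F' : hyperfield) (h : F -> F') (n r : nat)
  (phi : r.-tuple 'I_n -> F) :
  hmorphism h -> GP k phi -> GP k (fun x => h (phi x)).
Proof.
move=> hh.
have nz : not_zero phi -> not_zero (fun x => h (phi x)).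
  by move=> [t ht]; exists t; apply: hm_nz.
have alt : alternating phi -> alternating (fun x => h (phi x)).
  move=> [a1 a2]; split.
    by move=> t ht; rewrite a1 //; case: hh.
  move=> t s; rewrite a2; case: (hh) => _ [_ [-> _]].
  by rewrite hm_sign.
have gp : forall i j, gp_relation phi i j -> gp_relation (fun x => h (phi x)) i j.
  move=> i j; rewrite /gp_relation => hs.
  have := hm_hsum hh hs; case: (hh) => -> _; rewrite -map_comp.
  congr (hsum _ _); apply: eq_map => kk /=.
  case: (hh) => _ [_ [hM _]].
  by rewrite !hM hm_sign // hm_tapp.
have sup : Defs.support (fun x => h (phi x)) = Defs.support phi.
  apply: functional_extensionality => B; apply: propositional_extensionality.
  split=> -[t [ht ->]]; exists t; split=> //.
    by move=> e; apply: ht; rewrite e; case: hh.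
  exact: hm_nz.
case: k => /=.
  by move=> [h1 [h2 h3]]; split; [exact: nz | split; [exact: alt | move=> i j; exact: gp]].
move=> [h1 [h2 [h3 h4]]]; split; first exact: nz.
split; first exact: alt.
split; first by rewrite sup.
by move=> i j hc; apply: gp; apply: h4.
Qed.

Lemma top_ext (X : Type) (T : topology X) (U V : X -> Prop) :
  T U -> (forall x, U x <-> V x) -> T V.
Proof.
move=> hU e; have -> : V = U; last by [].
by apply: functional_extensionality => x; apply: propositional_extensionality; rewrite e.
Qed.

Lemma fin_inter (X : Type) (T : topology X) (A : finType) (D : A -> X -> Prop) :
  T (fun _ => True) -> (forall U V, T U -> T V -> T (fun x => U x /\ V x)) ->
  (forall a, T (D a)) -> T (fun x => forall a, D a x).
Proof.
move=> hT hI hD.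
suff : forall l : seq A, T (fun x => forall a, a \in l -> D a x).
  move=> /(_ (enum A)) h; apply: (top_ext h) => x; split.
    by move=> H a; apply: H; rewrite mem_enum.
  by move=> H a _.
elim=> [|a l IH].
  by apply: (top_ext hT) => x; split=> // _ a; rewrite in_nil.
apply: (top_ext (hI _ _ (hD a) IH)) => x; split.
  by move=> [h1 h2] b; rewrite in_cons => /orP [/eqP -> //|]; apply: h2.
move=> H; split; first by apply: H; rewrite in_cons eqxx.
by move=> b hb; apply: H; rewrite in_cons hb orbT.
Qed.

Lemma I01_True : I01_top (fun _ => True).
Proof.
exists (fun _ => True); split; last by [].
move=> x _; exists R1; split => //; exact: Rlt_0_1.
Qed.

Lemma R_inter (U V : R -> Prop) : R_top U -> R_top V -> R_top (fun x => U x /\ V x).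
Proof.
move=> hU hV x [ux vx].
case: (hU x ux) => e1 [he1 H1]; case: (hV x vx) => e2 [he2 H2].
exists (Rmin e1 e2); split; first by apply: Rmin_pos.
move=> y hy; split.
  by apply: H1; apply: (Rlt_le_trans _ _ _ hy); apply: Rmin_l.
by apply: H2; apply: (Rlt_le_trans _ _ _ hy); apply: Rmin_r.
Qed.

Lemma I01_inter (U V : I01 -> Prop) : I01_top U -> I01_top V ->
  I01_top (fun x => U x /\ V x).
Proof.
move=> [U' [hU eU]] [V' [hV eV]]; exists (fun x => U' x /\ V' x); split.
  exact: R_inter.
by move=> x; rewrite eU eV.
Qed.

Lemma scal_zero (F : hyperfield) (b x : F) : b <> hzero F ->
  (hmul b x = hzero F <-> x = hzero F).
Proof. by move=> hb; split; [exact: mul_eq0 | move=> ->; rewrite mulr0]. Qed.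

Lemma fiber_zero (F F'' : hyperfield) (f : F -> F'') (Hf : hmorphism f)
  (k : gp_kind) (n r : nat) (M : Gr k F'' n r) (c1 c2 : Real f M)
  (psi1 psi2 : r.-tuple 'I_n -> F) a :
  proj1_sig (proj1_sig (proj1_sig c1)) = cls psi1 ->
  proj1_sig (proj1_sig (proj1_sig c2)) = cls psi2 ->
  psi1 a = hzero F -> psi2 a = hzero F.
Proof.
case: c1 => c1 [phi1 [e1 m1]]; case: c2 => c2 [phi2 [e2 m2]] /= E1 E2 z1.
rewrite E1 in e1; rewrite E2 in e2.
case: (cls_eq e1) => b1 hb1 d1; case: (cls_eq e2) => b2 hb2 d2.
rewrite m1 in m2; case: (cls_eq (esym m2)) => b hb d.
have z : phi1 a = hzero F by move: z1; rewrite d1 (scal_zero _ hb1).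
have fz : f (phi2 a) = hzero F''.
  have da : f (phi2 a) = hmul b (f (phi1 a)) by exact: (congr1 (fun g => g a) d).
  rewrite da.
  have -> : f (phi1 a) = hzero F'' by rewrite z; case: Hf.
  by rewrite mulr0.
move/(hm_zero_iff Hf): fz => z2.
by rewrite d2 z2 mulr0.
Qed.

Lemma qmap_eq (F : hyperfield) (n r : nat) (s : projspace F n r) (psi : nzfun F n r) :
  proj1_sig s = cls (proj1_sig psi) -> s = qmap psi.
Proof.
case: s => S pf /= e; subst S; rewrite /qmap; f_equal; apply: proof_irrelevance.
Qed.

Lemma GP_nz (k : gp_kind) (F : hyperfield) (n r : nat) (phi : r.-tuple 'I_n -> F) :
  GP k phi -> not_zero phi.
Proof. by case: k => /= -[]. Qed.

Lemma norm_open (F : hyperfield) (TF : topology F) (HF : is_top_hyperfield TF)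
  (A : finType) (x0 : A) (Aa : A -> F -> Prop) (hA : forall a, coarse0 TF (Aa a)) :
  fun_top TF (fun psi => psi x0 <> hzero F /\
                 forall a, Aa a (hmul (hinv (psi x0)) (psi a))).
Proof.
case: HF => [[hT [_ [_ hI]]] [hnz [hmc hic]]].
move=> psi [hx0 hall].
have ex : forall a, exists CD : (F -> Prop) * (F -> Prop),
   [/\ TF CD.1, TF CD.2, CD.1 (psi a), CD.2 (psi x0) &
    forall u v, v <> hzero F -> CD.1 u -> CD.2 v -> Aa a (hmul (hinv v) u)].
  move=> a; case: (hA a) => [hall' | [hTa h0]].
    by exists ((fun _ => True), (fun _ => True)); split.
  have := hmc _ hTa (hinv (psi x0), psi a) (hall a).
  move=> [B [C [hB [hC [Bp [Cp hBC]]]]]].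
  have := hic _ hB; move=> [D [hD eD]].
  exists (C, D); split => //=.
    by have := eD (exist _ (psi x0) hx0); move=> /= <-.
  move=> u v hv Cu Dv.
  have Bv : B (hinv v) by have := eD (exist _ v hv); move=> /= ->.
  exact: (hBC (hinv v, u)).
have [CD hCD] : exists CD : A -> (F -> Prop) * (F -> Prop), forall a,
   [/\ TF (CD a).1, TF (CD a).2, (CD a).1 (psi a), (CD a).2 (psi x0) &
    forall u v, v <> hzero F -> (CD a).1 u -> (CD a).2 v -> Aa a (hmul (hinv v) u)].
  exists (fun a => proj1_sig (constructive_indefinite_description _ (ex a))).
  move=> a; exact: (proj2_sig (constructive_indefinite_description _ (ex a))).
have hDall : TF (fun y => forall a, (CD a).2 y).
  apply: fin_inter => // a; by case: (hCD a).
exists (fun b y => (CD b).1 y /\ (b = x0 -> y <> hzero F /\ forall a, (CD a).2 y)).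
split; [|split].
- move=> b; have [hC1 _ _ _ _] := hCD b; case: (eqVneq b x0) => [eb|hb].
    subst b; apply: (top_ext (hI _ _ hC1 (hI _ _ hnz hDall))) => y.
    by split=> [[h1 h2] | [h1 h2]]; split=> //; apply: h2.
  apply: (top_ext hC1) => y; split=> [h|[]//]; split=> // e.
  by rewrite e eqxx in hb.
- move=> b; split; first by case: (hCD b).
  move=> ->; split=> // a; by case: (hCD a).
- move=> phi hphi; have [_ hx] := hphi x0; have [nz hD] := hx erefl.
  split=> // a; case: (hCD a) => _ _ _ _; apply=> //.
  by case: (hphi a).
Qed.

Theorem theorem5p3 (F F' F'' : hyperfield)
  (TF : topology F) (TF' : topology F')
  (HF : is_top_hyperfield TF) (HF' : is_top_hyperfield TF')
  (f : F -> F'') (f' : F' -> F'')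
  (Hf : hmorphism f) (Hf' : hmorphism f')
  (k : gp_kind) (n r : nat) (M : Gr k F'' n r)
  (H : F * I01 -> F')
  (Hcont : continuous (prod_top (coarse0 TF) I01_top) (coarse0 TF') H)
  (Hhom : forall t : I01, hmorphism (fun x => H (x, t)))
  (Hcompat : forall (x : F) (t : I01), f' (H (x, t)) = f x) :
  exists G : Real f M * I01 -> Real f' M,
    continuous (prod_top (@Real_top k F F'' TF f n r M) I01_top) (@Real_top k F' F'' TF' f' n r M) G /\
    forall (c : Real f M) (t : I01) (phi : r.-tuple 'I_n -> F),
      proj1_sig (proj1_sig (proj1_sig c)) = cls phi ->
      proj1_sig (proj1_sig (proj1_sig (G (c, t)))) = cls (fun x => H (phi x, t)).
Proof.
pose rep (c : Real f M) := constructive_indefinite_description _ (proj2_sig (proj1_sig c)).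
have Gex : forall p : Real f M * I01, {g : Real f' M |
    proj1_sig (proj1_sig (proj1_sig g)) = cls (fun x => H (proj1_sig (rep p.1) x, p.2))}.
  move=> [c t] /=.
  case: (rep c) => phi [gp e] /=.
  set psi := fun x => H (phi x, t).
  have gpsi : GP k psi by exact: (GP_hm (h := fun y => H (y, t)) (Hhom t) gp).
  have nzpsi : not_zero psi by exact: GP_nz gpsi.
  pose P : projspace F' n r := exist _ (cls psi) (ex_intro _ (exist _ psi nzpsi) erefl).
  pose Q : Gr k F' n r := exist _ P (ex_intro _ psi (conj gpsi erefl)).
  have hR : exists phi', proj1_sig (proj1_sig Q) = cls phi' /\
      proj1_sig (proj1_sig M) = cls (fun x => f' (phi' x)).
    exists psi; split => //.
    have -> : (fun x => f' (psi x)) = (fun x => f (phi x)).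
      by apply: functional_extensionality => x; rewrite /psi Hcompat.
    case: (proj2_sig c) => phir [er mr]; rewrite mr; apply: (cls_hm (h := f)) => //.
    by rewrite -er e.
  refine (exist _ (exist _ Q hR) _).
  by [].
exists (fun p => proj1_sig (Gex p)); split; last first.
  move=> c t phi e; rewrite (proj2_sig (Gex (c, t))) /=; apply: (cls_hm (h := fun y => H (y, t))) => //.
  by case: (rep c) => phi' [_ e'] /=; rewrite -e' e.
move=> V [U1 [[U2 [[U3 [hU3 eU3]] eU1]] eV]].
have Vchar : forall (g : Real f' M) (psi : nzfun F' n r),
    proj1_sig (proj1_sig (proj1_sig g)) = cls (proj1_sig psi) -> V g <-> U3 (proj1_sig psi).
  move=> g psi e; rewrite eV eU1 -eU3; by rewrite (qmap_eq e).
move=> [c0 t0] /= hV.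
case hr0 : (rep c0) => [phi0 [gp0 e0]].
have [x0 hx0] := GP_nz gp0.
pose p0 := fun a => hmul (hinv (phi0 x0)) (phi0 a).
pose q0 := fun a => H (p0 a, t0).
have hp0 : p0 x0 <> hzero F by rewrite /p0 hmulC hmulV //; exact: hone_neq0.
have nzq0 : not_zero q0 by exists x0; apply: (hm_nz (Hhom t0)).
have U3q0 : U3 q0.
  have ephi : proj1_sig (rep c0) = phi0 by rewrite hr0.
  have eg : proj1_sig (proj1_sig (proj1_sig (proj1_sig (Gex (c0, t0))))) =
      cls (fun x => H (phi0 x, t0)).
    by rewrite (proj2_sig (Gex (c0, t0))) /= ephi.
  apply: (proj1 (Vchar (proj1_sig (Gex (c0, t0))) (exist _ q0 nzq0) _) hV) => /=.
  apply: (etrans eg); rewrite /q0; apply: (cls_hm (h := fun y => H (y, t0))) => //.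
  by rewrite /p0 cls_scale //; apply: inv_neq0.
have [Ub [hUb [Ubq hUbU]]] := hU3 q0 U3q0.
case: (HF') => [[_ [_ [_ hI']]] _].
have ex : forall a, exists AJ : (F -> Prop) * (I01 -> Prop),
   [/\ coarse0 TF AJ.1, I01_top AJ.2, AJ.1 (p0 a), AJ.2 t0 &
    p0 a <> hzero F -> forall y t, AJ.1 y -> AJ.2 t -> Ub a (H (y, t))].
  move=> a; case: (classic (p0 a = hzero F)) => ha.
    exists ((fun _ => True), (fun _ => True)); split=> //=; first by left.
    exact: I01_True.
  pose W := fun z => Ub a z /\ z <> hzero F'.
  have hW : coarse0 TF' W.
    right; split; last by move=> [].
    apply: hI' => //; by case: HF' => _ [].
  have := Hcont _ hW (p0 a, t0).
  case=> [|A [J [hA [hJ [Ap [Jt hAJ]]]]]].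
    split; [exact: Ubq | exact: (hm_nz (Hhom t0))].
  exists (A, J); split=> //= _ y t Ay Jt'.
  by case: (hAJ (y, t)).
have [AJ hAJ] : exists AJ : _ -> (F -> Prop) * (I01 -> Prop), forall a,
   [/\ coarse0 TF (AJ a).1, I01_top (AJ a).2, (AJ a).1 (p0 a), (AJ a).2 t0 &
    p0 a <> hzero F -> forall y t, (AJ a).1 y -> (AJ a).2 t -> Ub a (H (y, t))].
  exists (fun a => proj1_sig (constructive_indefinite_description _ (ex a))).
  move=> a; exact: (proj2_sig (constructive_indefinite_description _ (ex a))).
pose O' := fun psi : r.-tuple 'I_n -> F => psi x0 <> hzero F /\
                 forall a, (AJ a).1 (hmul (hinv (psi x0)) (psi a)).
pose S := fun s : projspace F n r => exists psi, proj1_sig s = cls psi /\ O' psi.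
exists (fun c : Real f M => S (proj1_sig (proj1_sig c))).
exists (fun t => forall a, (AJ a).2 t).
split; [|split; [|split; [|split]]].
- exists (fun g : Gr k F n r => S (proj1_sig g)); split => //.
  exists S; split => //.
  exists O'; split.
    have hA : forall a, coarse0 TF ((AJ a).1) by move=> a; case: (hAJ a).
    exact: (norm_open HF (x0 := x0) hA).
  move=> x; split.
    move=> [psi [e [hx hO]]]; case: (cls_eq e) => b hb eb; rewrite /O' eb.
    split; first by apply: hmul_neq0.
    by move=> a; rewrite norm_scale.
  by move=> h; exists (proj1_sig x).
- apply: fin_inter; [exact: I01_True | exact: I01_inter | move=> a; by case: (hAJ a)].
- exists phi0; split=> //; split=> // a; by case: (hAJ a).
- by move=> a; case: (hAJ a).
move=> [c t] /= [psi [epsi [hx hO]]] Jt.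
pose np := fun a => hmul (hinv (psi x0)) (psi a).
have hnp : np x0 <> hzero F by rewrite /np hmulC hmulV //; exact: hone_neq0.
have nzq : not_zero (fun a => H (np a, t)) by exists x0; apply: (hm_nz (Hhom t)).
have eqg : proj1_sig (proj1_sig (proj1_sig (proj1_sig (Gex (c, t))))) =
    cls (fun a => H (np a, t)).
  rewrite (proj2_sig (Gex (c, t))) /=; apply: (cls_hm (h := fun y => H (y, t))) => //.
  rewrite /np cls_scale; last by apply: inv_neq0.
  by case: (rep c) => phi' [_ e'] /=; rewrite -e' epsi.
apply: (proj2 (Vchar (proj1_sig (Gex (c, t))) (exist _ _ nzq) eqg)) => /=.
apply: hUbU => b; case: (classic (p0 b = hzero F)) => hb.
  have z0 : phi0 b = hzero F by move: hb; rewrite /p0 scal_zero //; apply: inv_neq0.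
  have zp : psi b = hzero F by exact: (fiber_zero Hf e0 epsi z0).
  have -> : np b = p0 b by rewrite /np zp mulr0 hb.
  have := Ubq b; rewrite /q0 hb.
  have -> : H (hzero F, t0) = hzero F' by case: (Hhom t0).
  by have -> : H (hzero F, t) = hzero F' by case: (Hhom t).
have [_ _ _ _ hh] := hAJ b; exact: hh.
Qed.
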